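(* If $X,Y$ are metric spaces with $|X|,|Y|\le2$, then $d_{\mathrm{GH}}(X,Y)=\widehat{d}_{\mathrm{GH}}(X,Y)$.
   Context: For $f:X\to Y$, $\operatorname{dis}(f)=\sup_{x,x'}|d_X(x,x')-d_Y(f(x),f(x'))|$; $\operatorname{codis}(f,g)=\sup_{x,y}|d_X(x,g(y))-d_Y(f(x),y)|$. $d_{\mathrm{GH}}$ is the Gromov--Hausdorff distance, equal to $\frac12\inf_{f,g}\max\{\operatorname{dis}(f),\operatorname{dis}(g),\operatorname{codis}(f,g)\}$; $\widehat{d}_{\mathrm{GH}}(X,Y)=\frac12\max\{\inf_{f:X\to Y}\operatorname{dis}(f),\inf_{g:Y\to X}\operatorname{dis}(g)\}$. *)

(* Defs.v *)
From HB Require Import structures.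
From mathcomp Require Import all_boot all_order all_algebra.
From mathcomp Require Import all_classical all_reals.
Set Implicit Arguments. Unset Strict Implicit. Unset Printing Implicit Defensive.
Import Order.TTheory GRing.Theory Num.Theory.
Local Open Scope ring_scope.
Local Open Scope classical_set_scope.

Section GH.
Variable R : realType.

Definition is_metric (X : Type) (d : X -> X -> R) : Prop :=
  (forall x y, d x y = 0 <-> x = y) /\
  (forall x y, d x y = d y x) /\
  (forall x y z, d x z <= d x y + d y z).

Definition dis (X Y : Type) (dX : X -> X -> R) (dY : Y -> Y -> R) (f : X -> Y) : R :=
  sup (range (fun p : X * X => `|dX p.1 p.2 - dY (f p.1) (f p.2)|)).

Definition codis (X Y : Type) (dX : X -> X -> R) (dY : Y -> Y -> R)
  (f : X -> Y) (g : Y -> X) : R :=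
  sup (range (fun p : X * Y => `|dX p.1 (g p.2) - dY (f p.1) p.2|)).

Definition dGH (X Y : Type) (dX : X -> X -> R) (dY : Y -> Y -> R) : R :=
  2^-1 * inf (range (fun fg : (X -> Y) * (Y -> X) =>
     Num.max (dis dX dY fg.1) (Num.max (dis dY dX fg.2) (codis dX dY fg.1 fg.2)))).

Definition dGH_hat (X Y : Type) (dX : X -> X -> R) (dY : Y -> Y -> R) : R :=
  2^-1 * Num.max (inf (range (fun f : X -> Y => dis dX dY f)))
                 (inf (range (fun g : Y -> X => dis dY dX g))).
End GH.

(* Main.v *)
Require Import Defs.
From HB Require Import structures.
From mathcomp Require Import all_boot all_order all_algebra.
From mathcomp Require Import all_classical all_reals.
From mathcomp Require Import lra.
Import Order.TTheory GRing.Theory Num.Theory.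
Local Open Scope ring_scope.

Lemma fsup_ub (R : realType) (T : finType) (F : T -> R) t :
  F t <= sup (range F).
Proof.
apply: sup_upper_bound; last by exists t.
split; first by exists (F t); exists t.
exists (\sum_(s : T) `|F s|) => y [s _ <-].
rewrite (bigD1 s) //=; apply: le_trans (ler_norm _) _.
by rewrite lerDl sumr_ge0.
Qed.

Lemma fsup_le (R : realType) (T : finType) (F : T -> R) (c : R) (t0 : T) :
  (forall t, F t <= c) -> sup (range F) <= c.
Proof.
move=> H; apply: ge_sup; first by exists (F t0); exists t0.
by move=> y [s _ <-].
Qed.

Lemma uniq_card (T : finType) (s : seq T) : uniq s -> (size s <= #|T|)%N.
Proof. by move=> u; rewrite -(card_uniqP u); apply: max_card. Qed.

Lemma two_pt {T : finType} {a b : T} (z : T) : (#|T| <= 2)%N -> a != b -> z = a \/ z = b.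
Proof.
move=> c ab; case: (eqVneq z a) => za; first by left.
case: (eqVneq z b) => zb; first by right.
have za' : a != z by rewrite eq_sym.
have zb' : b != z by rewrite eq_sym.
have : uniq [:: a; b; z] by rewrite /= !inE !negb_or ab za' zb'.
by move/uniq_card => /= h; have := leq_trans h c.
Qed.

Lemma one_pt (T : finType) (a b : T) : (#|T| <= 1)%N -> a = b.
Proof.
move=> c; case: (eqVneq a b) => // ab.
have : uniq [:: a; b] by rewrite /= inE ab.
by move/uniq_card => /= h; have := leq_trans h c.
Qed.

Lemma met0 {R : realType} {X : Type} {d : X -> X -> R} : is_metric d -> forall x, d x x = 0.
Proof. by case=> H _ x; apply/(H x x). Qed.

Lemma metge0 {R : realType} {X : Type} {d : X -> X -> R} : is_metric d -> forall x y, 0 <= d x y.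
Proof.
move=> m x y; have := (m.2.2 x y x); rewrite met0 // (m.2.1 y x).
by move=> h; lra.
Qed.

Lemma dis_ub {R : realType} {X Y : finType} (dX : X -> X -> R) (dY : Y -> Y -> R) f x x' :
  `|dX x x' - dY (f x) (f x')| <= dis dX dY f.
Proof. have := @fsup_ub R (X * X)%type (fun p => `|dX p.1 p.2 - dY (f p.1) (f p.2)|) (x, x'). rewrite /dis. move=> H. exact: H. Qed.

Lemma dis_ge0 {R : realType} {X Y : finType} (dX : X -> X -> R) (dY : Y -> Y -> R) f (x : X) :
  0 <= dis dX dY f.
Proof. have H := dis_ub dX dY f x x. have H0 := normr_ge0 (dX x x - dY (f x) (f x)). exact: (le_trans H0 H). Qed.

Lemma dis_le {R : realType} {X Y : finType} (dX : X -> X -> R) (dY : Y -> Y -> R) f (x0 : X) c :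
  (forall x x', `|dX x x' - dY (f x) (f x')| <= c) -> dis dX dY f <= c.
Proof. move=> H; have := @fsup_le R (X * X)%type (fun p => `|dX p.1 p.2 - dY (f p.1) (f p.2)|) c (x0, x0).
by rewrite /dis; apply => -[x x']; apply: H. Qed.

Lemma codis_le {R : realType} {X Y : finType} (dX : X -> X -> R) (dY : Y -> Y -> R) f g (x0 : X) (y0 : Y) c :
  (forall x y, `|dX x (g y) - dY (f x) y| <= c) -> codis dX dY f g <= c.
Proof. move=> H; have := @fsup_le R (X * Y)%type (fun p => `|dX p.1 (g p.2) - dY (f p.1) p.2|) c (x0, y0).
by rewrite /codis; apply => -[x y]; apply: H. Qed.

Lemma dich {R : realType} {X Y : finType} {dX : X -> X -> R} {dY : Y -> Y -> R} (f : X -> Y) :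
  is_metric dX -> is_metric dY -> (#|X| <= 2)%N -> (#|Y| <= 2)%N ->
  (exists g, cancel f g /\ cancel g f) \/ (forall x x', dX x x' <= dis dX dY f).
Proof.
move=> mX mY cX cY.
case: (pselect (exists a b, f a = f b /\ a <> b)) => [[a [b [fab ab]]]|ninj].
- right => x x'.
  have ab' : a != b by apply/eqP.
  have := dis_ub dX dY f a b; rewrite fab (met0 mY) subr0 ger0_norm ?(metge0 mX) // => h.
  case: (two_pt x cX ab') => ->; case: (two_pt x' cX ab') => ->;
    rewrite ?(met0 mX) ?(dis_ge0 _ _ _ a) //.
  by rewrite (mX.2.1 b a).
- have inj : injective f.
    move=> x y fxy; apply: contrapT => nxy; apply: ninj; by exists x, y.
  case: (leqP #|Y| #|X|) => c.
  + left; case: (inj_card_bij inj c) => g fg gf; by exists g.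
  + right => x x'; rewrite (@one_pt _ x x'); first by rewrite (met0 mX) (dis_ge0 _ _ _ x).
    by move: (leq_trans c cY); rewrite ltnS.
Qed.

Lemma mainpair (R : realType) (X Y : finType) (dX : X -> X -> R) (dY : Y -> Y -> R)
  (x0 : X) (y0 : Y) f0 g0 :
  is_metric dX -> is_metric dY -> (#|X| <= 2)%N -> (#|Y| <= 2)%N ->
  exists fg : (X -> Y) * (Y -> X),
    Num.max (dis dX dY fg.1) (Num.max (dis dY dX fg.2) (codis dX dY fg.1 fg.2))
    <= Num.max (dis dX dY f0) (dis dY dX g0).
Proof.
move=> mX mY cX cY.
case: (dich f0 mX mY cX cY) => [[h [fh hf]] | Df].
  exists (f0, h) => /=; apply: (@le_trans _ _ (dis dX dY f0)); last by rewrite le_max lexx.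
  rewrite !ge_max lexx /=; apply/andP; split.
    apply: (dis_le _ _ _ y0) => y y'.
    by rewrite -{1}[y]hf -{1}[y']hf distrC dis_ub.
  apply: (codis_le _ _ _ _ x0 y0) => x y.
  by rewrite -{2}[y]hf dis_ub.
case: (dich g0 mY mX cY cX) => [[h [gh hg]] | Dg].
  exists (h, g0) => /=; apply: (@le_trans _ _ (dis dY dX g0)); last by rewrite le_max lexx orbT.
  rewrite !ge_max lexx /=; apply/andP; split.
    apply: (dis_le _ _ _ x0) => x x'.
    by rewrite -{1}[x]hg -{1}[x']hg distrC dis_ub.
  apply: (codis_le _ _ _ _ x0 y0) => x y.
  by rewrite -{1}[x]hg distrC dis_ub.
exists (f0, g0) => /=.
have h1 : dis dX dY f0 <= Num.max (dis dX dY f0) (dis dY dX g0) by rewrite le_max lexx.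
have h2 : dis dY dX g0 <= Num.max (dis dX dY f0) (dis dY dX g0) by rewrite le_max lexx orbT.
move: (Num.max (dis dX dY f0) (dis dY dX g0)) h1 h2 => M h1 h2.
rewrite !ge_max h1 h2 /=.
apply: (codis_le _ _ _ _ x0 y0) => x y.
have a1 := Df x (g0 y); have a2 := Dg (f0 x) y.
have b1 := metge0 mX x (g0 y); have b2 := metge0 mY (f0 x) y.
rewrite ler_norml; apply/andP; split; lra.
Qed.

Theorem claim4 (R : realType) (X Y : finType)
  (dX : X -> X -> R) (dY : Y -> Y -> R) :
  is_metric dX -> is_metric dY ->
  (0 < #|X| <= 2)%N -> (0 < #|Y| <= 2)%N ->
  dGH dX dY = dGH_hat dX dY.
Proof.
move=> mX mY /andP[cX0 cX] /andP[cY0 cY].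
case/card_gt0P: cX0 => x0 _; case/card_gt0P: cY0 => y0 _.
rewrite /dGH /dGH_hat; congr (_ * _).
set FF := fun fg : (X -> Y) * (Y -> X) => _.
have neA : range (dis dX dY) !=set0%classic by exists (dis dX dY (fun _ => y0)); exists (fun _ => y0).
have neB : range (dis dY dX) !=set0%classic by exists (dis dY dX (fun _ => x0)); exists (fun _ => x0).
have neC : range FF !=set0%classic.
  by exists (FF ((fun _ => y0), (fun _ => x0))); exists ((fun _ => y0), (fun _ => x0)).
have FF0 fg : 0 <= FF fg.
  by rewrite /FF le_max (dis_ge0 _ _ _ x0).
have lbC : has_lbound (range FF) by exists 0 => _ [fg _ <-].
have lbA : has_lbound (range (dis dX dY)) by exists 0 => _ [f _ <-]; apply: (dis_ge0 _ _ _ x0).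
have lbB : has_lbound (range (dis dY dX)) by exists 0 => _ [f _ <-]; apply: (dis_ge0 _ _ _ y0).
apply/eqP; rewrite eq_le; apply/andP; split.
  rewrite leNgt; apply/negP; rewrite gt_max => /andP[HA HB].
  have [_ [f0 _ <-] lt1] := inf_lt neA HA.
  have [_ [g0 _ <-] lt2] := inf_lt neB HB.
  have [fg Hfg] := @mainpair R X Y dX dY x0 y0 f0 g0 mX mY cX cY.
  have : inf (range FF) <= FF fg by apply: ge_inf => //; exists fg.
  move=> H1; have H2 : Num.max (dis dX dY f0) (dis dY dX g0) < inf (range FF) by rewrite gt_max lt1 lt2.
  have := le_lt_trans (le_trans H1 Hfg) H2; by rewrite ltxx.
apply: lb_le_inf => // _ [[f g] _ <-]; rewrite ge_max; apply/andP; split.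
  apply: le_trans (ge_inf lbA _) _; first by exists f.
  by rewrite /FF /= le_max lexx.
apply: le_trans (ge_inf lbB _) _; first by exists g.
by rewrite /FF /= le_max le_max lexx orbT.
Qed.
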